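(* Let $n\ge4$, with the Laurent ring $L$ and the lexicographic monomial order $\preceq$ described in the context. Then, with brackets regarded as elements of $L$ via the embedding $G\subset L$ and leading monomials taken up to the sign of the coefficient, $$\mathrm{lm}_\preceq([\alpha_i,\alpha_j])=A_iA_{j-1}^{-1}C_{j-1}\quad(1\le i<j\le n),$$ and for $1\le i\le n$, $$\mathrm{lm}_\preceq([\alpha_i,\beta_m])=\begin{cases}A_iA_n^{-1}C_n & (m=1),\\ A_iB_{m-1}^{-1}D_{m-1} & (2\le m\le n-3),\\ A_i & (m=n-2).\end{cases}$$
   Context: Let $k$ be a field of characteristic zero. Symbols are pairs of independent indeterminates $\sigma=(\sigma_0,\sigma_1)$; the bracket is $[\sigma,\tau]:=\sigma_0\tau_1-\tau_0\sigma_1$. Fix $n\ge4$ and symbols $\alpha_1,\dots,\alpha_n,\beta_1,\dots,\beta_{n-2}$, and let $G$ be the $k$-algebra generated by all brackets of these symbols. Define $A_i=[\beta_{n-2},\alpha_i]$ ($1\le i\le n$), $B_i=[\beta_{n-2},\beta_i]$ ($1\le i\le n-3$), $C_i=[\alpha_i,\alpha_{i+1}]$ ($1\le i\le n-1$), $C_n=[\alpha_n,\beta_1]$, $D_i=[\beta_i,\beta_{i+1}]$ ($1\le i\le n-4$). (These are the Plücker coordinates of the sides and diagonals of the triangulation, by all diagonals through $\beta_{n-2}$, of a convex polygon with vertices $\alpha_1,\dots,\alpha_n,\beta_1,\dots,\beta_{n-2}$ in counterclockwise order.) These elements are algebraically independent, and by the Laurent phenomenon (Fomin–Zelevinsky)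 $G$ is contained in the Laurent polynomial ring $L=k[A_i,B_i,C_i,D_i,A_2^{-1},\dots,A_n^{-1},B_1^{-1},\dots,B_{n-4}^{-1}]$ (inside the fraction field). The monomial order $\preceq$ on Laurent monomials of $L$ is the lexicographic order on exponent vectors with variables ordered from largest to smallest as $(A_1,\dots,A_n,B_1,\dots,B_{n-3},C_1,\dots,C_n,D_1,\dots,D_{n-4})$; for nonzero $f\in L$, $\mathrm{lm}_\preceq(f)$ denotes the $\preceq$-largest Laurent monomial occurring in $f$ with nonzero coefficient. *)

(* Defs.v *)
From HB Require Import structures.
From mathcomp Require Import all_boot all_order all_algebra.
From mathcomp Require Import mpoly.
Unset Printing Implicit Defensive.
Import Order.TTheory GRing.Theory Num.Theory.
Local Open Scope ring_scope.

(* Symbols: alpha_1..alpha_n, beta_1..beta_{n-2}, i.e. 2n-2 symbols, numbered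
   0..2n-3 : alpha_i |-> i-1, beta_m |-> n+m-1.  Symbol s = (s_0, s_1) has its two
   coordinates as the independent indeterminates X_(2s), X_(2s+1) of the
   polynomial ring Rn k n := k[X_0, ..., X_(4n-5)]. *)
Definition Rn (k : fieldType) (n : nat) := {mpoly k[4 * n - 4]}.

Definition alpha (n i : nat) : nat := i.-1.
Definition beta (n m : nat) : nat := n + m.-1.

(* indeterminate number j (0 if out of range; never used out of range) *)
Definition mvar (k : fieldType) (n j : nat) : Rn k n :=
  match @insub nat (fun x => x < 4 * n - 4)%N _ j with
  | Some i => 'X_i | None => 0 end.

Definition coord (k : fieldType) (n s c : nat) : Rn k n := mvar k n (2 * s + c).

Definition bracket (k : fieldType) (n s t : nat) : Rn k n :=
  coord k n s 0 * coord k n t 1 - coord k n t 0 * coord k n s 1.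

(* The 4n-7 variables of L, in the order (largest to smallest)
   A_1..A_n, B_1..B_{n-3}, C_1..C_n, D_1..D_{n-4}, given as pairs of symbols
   whose bracket they are. *)
Definition cluster_pairs (n : nat) : seq (nat * nat) :=
  [seq (beta n (n - 2), alpha n i) | i <- iota 1 n] ++
  [seq (beta n (n - 2), beta n i) | i <- iota 1 (n - 3)] ++
  [seq (alpha n i, alpha n i.+1) | i <- iota 1 (n - 1)] ++
  [:: (alpha n n, beta n 1)] ++
  [seq (beta n i, beta n i.+1) | i <- iota 1 (n - 4)].

Definition NL (n : nat) : nat := 4 * n - 7.

Definition posA (n i : nat) : nat := i.-1.
Definition posB (n i : nat) : nat := n + i.-1.
Definition posC (n i : nat) : nat := n + (n - 3) + i.-1.
Definition posD (n i : nat) : nat := n + (n - 3) + n + i.-1.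

Definition cv (k : fieldType) (n : nat) (j : 'I_(NL n)) : Rn k n :=
  let p := nth (0, 0)%N (cluster_pairs n) j in bracket k n p.1 p.2.

(* variables allowed in the denominators of L: A_2..A_n, B_1..B_{n-4} *)
Definition invertible_pos (n j : nat) : bool :=
  ((1 <= j < n) || (n <= j < n + (n - 4)))%N.

(* A Laurent polynomial of L is represented as P / x^d with
   P : k[x_0..x_(4n-8)] and d an exponent vector supported on the invertible
   variables. *)
Definition inL (n : nat) (d : 'I_(NL n) -> nat) : Prop :=
  forall j, d j != 0%N -> invertible_pos n j.

(* P / x^d (with x_j := cv j) equals the element y of the fraction field
   (checked after clearing denominators in the domain Rn k n). *)
Definition represents (k : fieldType) (n : nat) (P : {mpoly k[NL n]})
    (d : 'I_(NL n) -> nat) (y : Rn k n) : Prop :=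
  mmap (@mpolyC _ k) (cv k n) P = y * \prod_(j < NL n) cv k n j ^+ d j.

(* lexicographic order on Laurent exponent vectors, variable 0 largest *)
Definition lex_le (N : nat) (a b : 'I_N -> int) : Prop :=
  (forall j, a j = b j) \/
  exists j : 'I_N, (forall i : 'I_N, (i < j)%N -> a i = b i) /\ a j < b j.

Definition lm_is (k : fieldType) (n : nat) (P : {mpoly k[NL n]})
    (d : 'I_(NL n) -> nat) (e : 'I_(NL n) -> int) : Prop :=
  (exists2 m : 'X_{1..NL n}, m \in msupp P & forall j, (m j)%:Z - (d j)%:Z = e j)
  /\ (forall m : 'X_{1..NL n}, m \in msupp P ->
        lex_le (NL n) (fun j => (m j)%:Z - (d j)%:Z) e).

Definition mono (n : nat) (l : seq (nat * int)) : 'I_(NL n) -> int :=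
  fun j => \sum_(p <- l | p.1 == val j) p.2.

Definition lm_statement (k : fieldType) (n : nat) (y : Rn k n)
    (e : 'I_(NL n) -> int) : Prop :=
  (exists (P : {mpoly k[NL n]}) (d : 'I_(NL n) -> nat),
      inL n d /\ represents k n P d y /\ lm_is k n P d e) /\
  (forall (P : {mpoly k[NL n]}) (d : 'I_(NL n) -> nat),
      inL n d -> represents k n P d y -> lm_is k n P d e).

(* Main.v *)
Require Import Defs.
From HB Require Import structures.
From mathcomp Require Import all_boot all_order all_algebra.
From mathcomp Require Import mpoly.
From mathcomp Require Import zify ring.
Import Order.TTheory GRing.Theory Num.Theory.
Local Open Scope ring_scope.

Lemma iota_sh a m : iota a m = map (addn a) (iota 0 m).
Proof. by rewrite -iotaDl addn0. Qed.

Lemma cluster_pairsE n : (4 <= n)%N ->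
  cluster_pairs n = [seq ((2*n-3)%N, u) | u <- iota 0 (2*n-3)] ++
                    [seq (u, u.+1) | u <- iota 0 (2*n-4)].
Proof.
move=> n4.
have hb : beta n (n-2) = (2*n-3)%N by rewrite /beta; lia.
rewrite /cluster_pairs hb /alpha /beta.
have -> : (2*n-3 = n + (n-3))%N by lia.
have -> : (2*n-4 = (n-1) + 1 + (n-4))%N by lia.
rewrite !iotaD !map_cat -!catA.
rewrite [iota 1 n]iota_sh [iota 1 (n-3)]iota_sh [iota 1 (n-1)]iota_sh [iota 1 (n-4)]iota_sh.
rewrite [iota (0 + n) _]iota_sh [iota (0 + (n-1) + 1) _]iota_sh -!map_comp.
congr (_ ++ _ ++ _ ++ _ ++ _).
all: try (apply: eq_map => i /=; congr (_, _); lia).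
rewrite /=; congr [:: (_, _)]; lia.
Qed.


Lemma cvO (k : fieldType) n (j : 'I_(NL n)) : (4 <= n)%N -> (j < 2*n-3)%N ->
  cv k n j = bracket k n (2*n-3) j.
Proof.
move=> n4 lt; rewrite /cv cluster_pairsE // nth_cat size_map size_iota lt.
by rewrite (nth_map 0%N) ?size_iota // nth_iota.
Qed.

Lemma cvC (k : fieldType) n (j : 'I_(NL n)) : (4 <= n)%N -> (2*n-3 <= j)%N ->
  cv k n j = bracket k n (j - (2*n-3)) (j - (2*n-3)).+1.
Proof.
move=> n4 le; have ltj := ltn_ord j; rewrite /NL in ltj.
rewrite /cv cluster_pairsE // nth_cat size_map size_iota ltnNge le /=.
rewrite (nth_map 0%N) ?size_iota ?nth_iota //; move: ltj le n4; clear; move: (nat_of_ord j) => x; lia.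
Qed.

Section Main.
Variables (k : fieldType) (n : nat).
Hypothesis n4 : (4 <= n)%N.
Local Notation N := (NL n).
Local Notation K := (2*n-3)%N.

Definition mon (f : nat -> nat) : 'X_{1..N} := [multinom f i | i < N].
Definition Pr (f : nat -> nat) : Rn k n := \prod_(j < N) cv k n j ^+ f j.

Lemma mmap_mon f : mmap (@mpolyC _ k) (cv k n) 'X_[mon f] = Pr f.
Proof. by rewrite mmapX /mmap1 /Pr; apply: eq_bigr => j _; rewrite mnmE. Qed.

Lemma Pr_ext f g : (forall i, (i < N)%N -> f i = g i) -> Pr f = Pr g.
Proof. by move=> e; apply: eq_bigr => j _; rewrite e. Qed.

Lemma PrD f g : Pr (fun i => f i + g i)%N = Pr f * Pr g.
Proof. by rewrite /Pr -big_split; apply: eq_bigr => j _; rewrite exprD. Qed.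

Lemma Pr0 : Pr (fun _ => 0%N) = 1.
Proof. by rewrite /Pr big1 // => j _; rewrite expr0. Qed.

Lemma Pr1 j0 (lt : (j0 < N)%N) : Pr (fun i => (i == j0) : nat) = cv k n (Ordinal lt).
Proof.
rewrite /Pr (bigD1 (Ordinal lt)) //= eqxx expr1 big1 ?mulr1 // => j.
by rewrite -val_eqE /= => /negbTE ->; rewrite expr0.
Qed.

Lemma PrO u : (u < K)%N -> Pr (fun i => (i == u) : nat) = bracket k n K u.
Proof.
move=> lt; have lt' : (u < N)%N by rewrite /NL; lia.
by rewrite (Pr1 _ lt') cvO.
Qed.

Lemma PrC u : (u.+1 < K)%N -> Pr (fun i => (i == K + u) : nat) = bracket k n u u.+1.
Proof.
move=> lt; have lt' : (K + u < N)%N by rewrite /NL; lia.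
by rewrite (Pr1 _ lt') cvC //= ?leq_addr // addKn.
Qed.

Definition term u r l (i : nat) : nat :=
  (((u <= i <= u + r) && (i != u+l) && (i != u+l+1)) + (i == K+u+l))%N.
Definition dd u r (i : nat) : nat := (u < i < u + r)%N.
Definition Q u r : {mpoly k[N]} := \sum_(l < r) 'X_[mon (term u r l)].

Lemma plucker (a x y z : nat) :
  bracket k n a y * bracket k n x z =
  bracket k n a x * bracket k n y z + bracket k n a z * bracket k n x y.
Proof. rewrite /bracket; ring. Qed.

Lemma Q_rep u r : (u + r.+1 < K)%N ->
  mmap (@mpolyC _ k) (cv k n) (Q u r.+1) = bracket k n u (u + r.+1) * Pr (dd u r.+1).
Proof.
elim: r => [|r IH] lt.
  rewrite /Q big_ord1 mmap_mon.
  rewrite (@Pr_ext _ (fun i => (i == K + u) : nat)); last by move=> i _; rewrite /term /= !addn0; lia.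
  rewrite (@Pr_ext (dd u 1) (fun _ => 0%N)); last by move=> i _; rewrite /dd; lia.
  by rewrite Pr0 mulr1 PrC ?addn1 //; lia.
rewrite /Q big_ord_recr /= raddfD raddf_sum /=.
rewrite (eq_bigr (fun l : 'I_r.+1 => mmap (@mpolyC _ k) (cv k n) 'X_[mon (term u r.+1 l)] *
     Pr (fun i => (i == u + r.+2)%N : nat))); last first.
  move=> l _; rewrite !mmap_mon -PrD; apply: Pr_ext => i _.
  have := ltn_ord l; move: (nat_of_ord l) => x hx; rewrite /term; lia.
rewrite -mulr_suml -raddf_sum /= IH; last by lia.
rewrite mmap_mon.
rewrite (@Pr_ext (term u r.+2 r.+1) (fun i => ((i == u) + dd u r.+1 i + (i == K + (u + r.+1)))%N)); last first.
  by move=> i _; rewrite /term /dd; lia.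
rewrite (@Pr_ext (dd u r.+2) (fun i => (dd u r.+1 i + (i == u + r.+1))%N)); last first.
  by move=> i _; rewrite /dd; lia.
rewrite !PrD PrO; last by lia.
rewrite PrC; last by lia.
rewrite PrO; last by lia.
rewrite PrO; last by lia.
have e1 : (u + r.+2 = (u + r.+1).+1)%N by lia.
rewrite e1.
set v := (u + r.+1)%N.
set P := Pr (dd u r.+1).
have pl := plucker K u v v.+1.
transitivity (P * (bracket k n K u * bracket k n v v.+1 + bracket k n K v.+1 * bracket k n u v)); first ring.
rewrite -pl; ring.
Qed.


Local Notation S := {mpoly k[N]}.

Lemma mon_ext f g : (forall i, (i < N)%N -> f i = g i) -> mon f = mon g.
Proof. by move=> e; apply/mnmP => i; rewrite !mnmE e. Qed.

Lemma monD f g : (mon f + mon g)%MM = mon (fun i => f i + g i)%N.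
Proof. by apply/mnmP => i; rewrite mnmDE !mnmE. Qed.

Definition z (s : nat) : S := 'X_[mon (fun i => (i == s) : nat)].
Definition ssum (s : nat) : S := \sum_(t < s) z (K + t).
Definition hfun (j : nat) : S :=
  if j./2 == K then (if odd j then -1 else 0)
  else (if odd j then z j./2 * ssum j./2 else z j./2).
Definition psi (x : Rn k n) : S := mmap (@mpolyC _ k) (fun i : 'I_(4*n-4) => hfun i) x.
Lemma psiM x y : psi (x * y) = psi x * psi y.
Proof. by rewrite /psi rmorphM. Qed.
Lemma psiB x y : psi (x - y) = psi x - psi y.
Proof. by rewrite /psi rmorphB. Qed.
Lemma psi_sum I (r : seq I) (F : I -> Rn k n) : psi (\sum_(i <- r) F i) = \sum_(i <- r) psi (F i).
Proof. by rewrite /psi rmorph_sum. Qed.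
Lemma psi_prod I (r : seq I) (F : I -> Rn k n) : psi (\prod_(i <- r) F i) = \prod_(i <- r) psi (F i).
Proof. by rewrite /psi rmorph_prod. Qed.
Lemma psiX x e : psi (x ^+ e) = psi x ^+ e.
Proof. by rewrite /psi rmorphXn. Qed.
Lemma psiC c : psi (c%:MP) = c%:MP.
Proof. by rewrite /psi mmapC. Qed.

Lemma psi_mvar j : (j < 4*n-4)%N -> psi (mvar k n j) = hfun j.
Proof.
move=> lt; rewrite /mvar insubT /psi mmapX mmap1U //.
Qed.

Lemma psi_coord0 s : (s <= K)%N -> psi (Defs.coord k n s 0%N) = if s == K then 0 else z s.
Proof.
move=> le; rewrite /Defs.coord psi_mvar; last by lia.
by rewrite /hfun addn0 mul2n doubleK odd_double.
Qed.

Lemma psi_coord1 s : (s <= K)%N -> psi (Defs.coord k n s 1%N) = if s == K then -1 else z s * ssum s.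
Proof.
move=> le; rewrite /Defs.coord psi_mvar; last by lia.
by rewrite /hfun addn1 mul2n /= uphalf_double odd_double.
Qed.

Lemma zM s t : z s * z t = 'X_[mon (fun i => (i == s) + (i == t))%N].
Proof. by rewrite /z -mpolyXD monD. Qed.

Lemma psi_brO u : (u < K)%N -> psi (bracket k n K u) = z u.
Proof.
move=> lt; rewrite /bracket psiB !psiM.
have hK : (K <= K)%N by []. have hu : (u <= K)%N by lia.
rewrite (psi_coord0 _ hK) (psi_coord1 _ hK) (psi_coord0 _ hu) (psi_coord1 _ hu).
have -> : (u == K) = false by apply/negbTE; rewrite neq_ltn lt.
by rewrite eqxx mul0r sub0r mulrN1 opprK.
Qed.

Lemma psi_brC u : (u.+1 < K)%N ->
  psi (bracket k n u u.+1) = 'X_[mon (fun i => (i == u) + (i == u.+1) + (i == K + u))%N].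
Proof.
move=> lt; rewrite /bracket psiB !psiM.
have hu : (u <= K)%N by lia. have hu1 : (u.+1 <= K)%N by lia.
rewrite (psi_coord0 _ hu) (psi_coord1 _ hu) (psi_coord0 _ hu1) (psi_coord1 _ hu1).
have -> : (u == K) = false by apply/negbTE; rewrite neq_ltn; apply/orP; left; lia.
have -> : (u.+1 == K) = false by apply/negbTE; rewrite neq_ltn lt.
rewrite /ssum big_ord_recr /=.
have -> : z u * (z u.+1 * (\sum_(i < u) z (K + i) + z (K + u))) -
  z u.+1 * (z u * \sum_(i < u) z (K + i)) = z u * z u.+1 * z (K + u) by ring.
by rewrite zM /z -mpolyXD monD.
Qed.

Definition gf (j i : nat) : nat := ((i == j) + (K <= j) * ((i == j - K) + (i == j - K + 1)))%N.

Lemma psi_cv (j : 'I_N) : psi (cv k n j) = 'X_[mon (gf j)].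
Proof.
have ltj := ltn_ord j; rewrite /NL in ltj.
case: (ltnP j K) => h.
  rewrite cvO // psi_brO // /z; congr 'X_[_]; apply: mon_ext => i _.
  rewrite /gf; move: h ltj; move: (nat_of_ord j) => x; lia.
rewrite cvC // psi_brC; last by move: h ltj; move: (nat_of_ord j) => x; lia.
congr 'X_[_]; apply: mon_ext => i _.
rewrite /gf; move: h ltj; move: (nat_of_ord j) => x; lia.
Qed.

Definition Fm (m : 'X_{1..N}) : 'X_{1..N} := (\sum_(j < N) mon (gf j) *+ m j)%MM.

Lemma psi0 : psi 0 = 0.
Proof. by rewrite /psi raddf0. Qed.

Lemma psi_mmap P : psi (mmap (@mpolyC _ k) (cv k n) P) =
  \sum_(m <- msupp P) (P@_m)%:MP * 'X_[Fm m].
Proof.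
rewrite {1}/mmap psi_sum; apply: eq_bigr => m _; rewrite psiM psiC /mmap1 psi_prod.
congr (_ * _).
rewrite (eq_bigr (fun j : 'I_N => 'X_[mon (gf j)] ^+ m j)) => [|j _]; last by rewrite psiX psi_cv.
by rewrite mprodXnE.
Qed.

Lemma Fm_coord m (i : 'I_N) : Fm m i = (\sum_(j < N) gf j i * m j)%N.
Proof. by rewrite mnm_sumE; apply: eq_bigr => j _; rewrite mulmnE mnmE. Qed.

Definition Tsum (m : 'X_{1..N}) (i : nat) : nat :=
  (\sum_(j < N) ((K <= j) * ((i == j - K) + (i == j - K + 1))) * m j)%N.

Lemma sum_delta (i : 'I_N) (f : 'I_N -> nat) : (\sum_(j < N) ((i : nat) == j) * f j)%N = f i.
Proof.
rewrite (bigD1 i) //= eqxx mul1n big1 ?addn0 // => j nji.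
case: eqP => [e|_]; last by rewrite mul0n.
by case/eqP: nji; apply: ord_inj.
Qed.

Lemma Fm_T m (i : 'I_N) : Fm m i = (m i + Tsum m i)%N.
Proof.
rewrite Fm_coord /Tsum -(sum_delta i m) -big_split; apply: eq_bigr => j _.
by rewrite /gf mulnDl.
Qed.

Lemma Tsum0 m (i : 'I_N) : (K <= i)%N -> Tsum m i = 0%N.
Proof.
move=> h; rewrite /Tsum big1 // => j _.
have ltj := ltn_ord j; rewrite /NL in ltj.
suff -> : ((K <= j) * (((i:nat) == j - K) + ((i:nat) == j - K + 1)) = 0)%N by rewrite mul0n.
move: h ltj; move: (nat_of_ord j) (nat_of_ord i) => x y; lia.
Qed.

Lemma Tsum_ext (m m' : 'X_{1..N}) (i : nat) : (forall j : 'I_N, (K <= j)%N -> m j = m' j) -> Tsum m i = Tsum m' i.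
Proof.
move=> e; rewrite /Tsum; apply: eq_bigr => j _.
case: (leqP K j) => h; first by rewrite e.
by rewrite !mul0n.
Qed.

Lemma Fm_inj : injective Fm.
Proof.
move=> m m' e.
have hK : forall j : 'I_N, (K <= j)%N -> m j = m' j.
  move=> j h; have := f_equal (fun x : 'X_{1..N} => x j) e.
  by rewrite /= !Fm_T !Tsum0 // !addn0.
apply/mnmP => i; have := f_equal (fun x : 'X_{1..N} => x i) e.
rewrite /= !Fm_T (Tsum_ext _ _ i hK); apply: addIn.
Qed.

Lemma psi_coef P m0 : (psi (mmap (@mpolyC _ k) (cv k n) P))@_(Fm m0) = P@_m0.
Proof.
rewrite psi_mmap raddf_sum /=.
transitivity ((\sum_(m <- msupp P) P@_m *: 'X_[m])@_m0); last by rewrite -mpolyE.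
rewrite raddf_sum /=; apply: eq_bigr => m _.
by rewrite mcoeffCM mcoeffZ !mcoeffX (inj_eq Fm_inj).
Qed.

Lemma mmap_cv_inj P : mmap (@mpolyC _ k) (cv k n) P = 0 -> P = 0.
Proof.
by move=> h; apply/mpolyP => m; rewrite mcoeff0 -psi_coef h psi0 mcoeff0.
Qed.

Definition md (d : 'I_N -> nat) : 'X_{1..N} := [multinom d i | i < N].

Lemma mmap_md d : mmap (@mpolyC _ k) (cv k n) 'X_[md d] = \prod_(j < N) cv k n j ^+ d j.
Proof. by rewrite mmapX /mmap1; apply: eq_bigr => j _; rewrite mnmE. Qed.

Lemma rep_shift P d P' d' y : represents k n P d y -> represents k n P' d' y ->
  P * 'X_[md d'] = P' * 'X_[md d].
Proof.
rewrite /represents => h h'; apply/eqP; rewrite -subr_eq0; apply/eqP/mmap_cv_inj.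
rewrite raddfB /= !rmorphM /= h h' !mmap_md.
by rewrite mulrAC subrr.
Qed.

Lemma shift_supp (P P' : {mpoly k[N]}) (a b : 'X_{1..N}) m : P * 'X_[a] = P' * 'X_[b] -> m \in msupp P ->
  exists2 m', m' \in msupp P' & forall j, (m j)%:Z - (b j)%:Z = (m' j)%:Z - (a j)%:Z.
Proof.
move=> e hm.
have : (a + m)%MM \in msupp (P' * 'X_[b]).
  by rewrite -e mcoeff_msupp mcoeffMX -mcoeff_msupp.
rewrite (perm_mem (msuppMX _ _)) => /mapP [m' hm' em].
exists m' => // j; have := f_equal (fun x : 'X_{1..N} => x j) em.
rewrite /= !mnmDE => ej; lia.
Qed.

Lemma lex_le_ext N0 (a a' b : 'I_N0 -> int) : (forall j, a j = a' j) -> lex_le N0 a b -> lex_le N0 a' b.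
Proof.
move=> e [h|[j [h1 h2]]]; [left => j; by rewrite -e h | right; exists j; split].
- by move=> i hi; rewrite -e h1.
- by rewrite -e.
Qed.

Lemma lm_transfer P d P' d' e : P * 'X_[md d'] = P' * 'X_[md d] ->
  lm_is k n P d e -> lm_is k n P' d' e.
Proof.
move=> E [[m hm em] hall]; split.
  have [m' hm' em'] := shift_supp _ _ _ _ _ E hm.
  exists m' => // j; rewrite -em; move: (em' j); rewrite /md !mnmE; lia.
move=> m' hm'.
have [m2 hm2 em2] := shift_supp _ _ _ _ _ (esym E) hm'.
apply: (lex_le_ext _ _ _ _ _ (hall m2 hm2)) => j.
move: (em2 j); rewrite /md !mnmE => ->; lia.
Qed.

Lemma lm_statement_of P0 d0 y e : inL n d0 -> represents k n P0 d0 y -> lm_is k n P0 d0 e ->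
  lm_statement k n y e.
Proof.
move=> hi hr hl; split; first by exists P0, d0.
move=> P d _ hr'; exact: (lm_transfer _ _ _ _ _ (rep_shift _ _ _ _ _ hr hr') hl).
Qed.

Lemma lm_is_ext P d e e' : (forall j, e j = e' j) -> lm_is k n P d e -> lm_is k n P d e'.
Proof.
move=> E [[m hm em] hall]; split; first by exists m => // j; rewrite -E.
move=> m0 /hall [h|[j [h1 h2]]]; [left => j; by rewrite -E h | right; exists j; split].
  by move=> i hi; rewrite -E h1.
by rewrite -E.
Qed.

Lemma mon_eq_at f g i : mon f = mon g -> (i < N)%N -> f i = g i.
Proof.
move=> e lt; have := f_equal (fun x : 'X_{1..N} => x (Ordinal lt)) e.
by rewrite /= !mnmE.
Qed.

Lemma Q_coef u r m : (Q u r)@_m = \sum_(l < r) ((mon (term u r l) == m)%:R : k).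
Proof. by rewrite /Q raddf_sum; apply: eq_bigr => l _; apply: mcoeffX. Qed.

Lemma Q_supp u r m : m \in msupp (Q u r) -> exists l : 'I_r, m = mon (term u r l).
Proof.
rewrite mcoeff_msupp Q_coef => h.
case: (pickP (fun l : 'I_r => mon (term u r l) == m)) => [l /eqP <-|none]; first by exists l.
by move: h; rewrite big1 ?eqxx // => l _; rewrite none.
Qed.

Lemma term_neq u r l : (l.+1 < r)%N -> (u + r < K)%N -> mon (term u r l) != mon (term u r r.-1).
Proof.
move=> h1 h2; apply/negP => /eqP e.
have lt : (u + l < N)%N by rewrite /NL; lia.
have := mon_eq_at _ _ _ e lt; rewrite /term; lia.
Qed.

Lemma Q_lead u r : (u + r.+1 < K)%N -> mon (term u r.+1 r) \in msupp (Q u r.+1).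
Proof.
move=> lt; rewrite mcoeff_msupp Q_coef big_ord_recr /= eqxx big1 ?add0r ?oner_neq0 //.
move=> l _; have := term_neq u r.+1 l; rewrite /= => h.
by rewrite (negbTE (h _ lt)) //; apply: ltn_ord.
Qed.

Lemma Q_lm u r : (u + r.+1 < K)%N ->
  lm_is k n (Q u r.+1) (fun j => dd u r.+1 j) (fun j => (term u r.+1 r j)%:Z - (dd u r.+1 j)%:Z).
Proof.
move=> lt; split.
  by exists (mon (term u r.+1 r)); [apply: Q_lead | move=> j; rewrite mnmE].
move=> m /Q_supp [l ->].
have := ltn_ord l; rewrite ltnS leq_eqVlt => /orP [/eqP el|ll].
  by left => j; rewrite mnmE el.
move: (nat_of_ord l) ll => y ll.
have lt' : (u + y < N)%N by rewrite /NL; lia.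
right; exists (Ordinal lt'); split.
  move=> i /= hi; rewrite mnmE /term /dd /=; move: hi; move: (nat_of_ord i) => x; lia.
rewrite /= mnmE /term /dd /=; lia.
Qed.

Lemma main_gen u v : (u < v)%N -> (v < K)%N ->
  lm_statement k n (bracket k n u v) (mono n [:: (u, 1); (v.-1, -1); ((K + v.-1)%N, 1)]).
Proof.
move=> uv vK.
have [r er] : exists r, v = (u + r.+1)%N by exists (v - u - 1)%N; lia.
subst v.
apply: (lm_statement_of (Q u r.+1) (fun j => dd u r.+1 j)).
- move=> j; rewrite /dd /invertible_pos; have := ltn_ord j; move: (nat_of_ord j) => x.
  rewrite /NL; lia.
- by rewrite /represents Q_rep.
apply: lm_is_ext (Q_lm _ _ vK) => j.
rewrite /mono !big_cons big_nil /= /term /dd.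
have := ltn_ord j; move: (nat_of_ord j) => x; rewrite /NL => hx.
rewrite addnS /=; case: (eqVneq u x) => h1; case: (eqVneq (u+r)%N x) => h2; case: (eqVneq (K + (u+r))%N x) => h3; lia.
Qed.

Lemma main_O u : (u < K)%N -> lm_statement k n (bracket k n u K) (mono n [:: (u, 1)]).
Proof.
move=> uK.
set m0 := mon (fun i => (i == u) : nat).
apply: (lm_statement_of (- 'X_[m0]) (fun _ => 0%N)).
- by move=> j; rewrite eqxx.
- rewrite /represents raddfN /= mmap_mon PrO // big1 => [|j _]; last by rewrite expr0.
  rewrite mulr1 /bracket; ring.
have hs : forall m, m \in msupp (- 'X_[m0] : {mpoly k[N]}) -> m = m0.
  move=> m; rewrite mcoeff_msupp mcoeffN mcoeffX; case: (eqVneq m0 m) => [->//|_]; by rewrite oppr_eq0 eqxx.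
split.
  exists m0.
    by rewrite mcoeff_msupp mcoeffN mcoeffX eqxx oppr_eq0 oner_neq0.
  move=> j; rewrite /mono big_cons big_nil /= mnmE.
  by case: (eqVneq u j) => h; rewrite ?h ?eqxx //= eq_sym (negbTE h).
move=> m /hs ->; left => j; rewrite /mono big_cons big_nil /= mnmE.
by case: (eqVneq u j) => h; rewrite ?h ?eqxx //= eq_sym (negbTE h).
Qed.
End Main.

Theorem lemma5p4 (k : fieldType) (n : nat) :
  [pchar k] =i pred0 -> (4 <= n)%N ->
  (forall i j : nat, (1 <= i)%N -> (i < j)%N -> (j <= n)%N ->
     lm_statement k n (bracket k n (alpha n i) (alpha n j))
       (mono n [:: (posA n i, 1); (posA n j.-1, -1); (posC n j.-1, 1)])) /\
  (forall i : nat, (1 <= i <= n)%N ->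
     lm_statement k n (bracket k n (alpha n i) (beta n 1))
       (mono n [:: (posA n i, 1); (posA n n, -1); (posC n n, 1)])) /\
  (forall i m : nat, (1 <= i <= n)%N -> (2 <= m <= n - 3)%N ->
     lm_statement k n (bracket k n (alpha n i) (beta n m))
       (mono n [:: (posA n i, 1); (posB n m.-1, -1); (posD n m.-1, 1)])) /\
  (forall i : nat, (1 <= i <= n)%N ->
     lm_statement k n (bracket k n (alpha n i) (beta n (n - 2)))
       (mono n [:: (posA n i, 1)])).
Proof.
move=> _ n4; split; [|split; [|split]].
- move=> i j h1 h2 h3.
  have e : posC n j.-1 = (2*n-3 + (j.-1).-1)%N by rewrite /posC; lia.
  rewrite e /alpha /posA.
  apply: main_gen => //; lia.
- move=> i /andP [h1 h2].
  have e1 : posC n n = (2*n-3 + (n.-1))%N by rewrite /posC; lia.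
  have e2 : beta n 1 = n by rewrite /beta addn0.
  rewrite e1 e2 /alpha /posA.
  have := main_gen k n n4 i.-1 n; rewrite /=; apply; lia.
- move=> i m /andP [h1 h2] /andP [h3 h4].
  have e1 : posD n m.-1 = (2*n-3 + (n + m.-1).-1)%N by rewrite /posD; lia.
  have e2 : posB n m.-1 = (n + m.-1).-1 by rewrite /posB; lia.
  rewrite e1 e2 /alpha.
  apply: main_gen => //; rewrite /beta; lia.
- move=> i /andP [h1 h2].
  have e : beta n (n - 2) = (2*n-3)%N by rewrite /beta; lia.
  rewrite e /alpha /posA.
  apply: main_O => //; lia.
Qed.
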